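(* Let $\Lambda$ be a right Morita ring and $P$ a finite poset. Let $P^*$ be the poset obtained from $P$ by adding a largest element $*$, and let $\Lambda P^*$ be the incidence algebra. Let $\mathcal{S}=\operatorname{rep}_\Lambda P$ be the full subcategory of $\operatorname{Mod}\Lambda P^*$ consisting of the subspace representations of $P$, and $\mathcal{S}^{\mathrm{fin}}=\mathcal{S}\cap\operatorname{mod}\Lambda P^*$. Then $\mathcal{S}^{\mathrm{fin}}$ is functorially finite in $\operatorname{mod}\Lambda P^*$ with respect to $\mathcal{S}$; that is, every finitely generated $\Lambda P^*$-module $X$ has a right approximation $r:R(X)\to X$ with $R(X)\in\mathcal{S}^{\mathrm{fin}}$ such that every morphism $Z\to X$ with $Z\in\mathcal{S}$ factors through $r$, and a left approximation $l:X\to L(X)$ with $L(X)\in\mathcal{S}^{\mathrm{fin}}$ such that every morphism $X\to Z$ with $Z\in\mathcal{S}$ factors through $l$.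
   Context: A right Morita ring is an artinian ring such that the injective envelopes of simple right modules are finitely generated. The incidence algebra $\Lambda P^*$ is the free $\Lambda$-module with basis $\{(i,j): i\le j \text{ in } P^*\}$ with the usual multiplication; right $\Lambda P^*$-modules are identified with representations $X=(X_i,X_{ij})$ consisting of right $\Lambda$-modules $X_i$ ($i\in P^*$) and $\Lambda$-linear maps $X_{ij}:X_i\to X_j$ for $i\le j$ with $X_{ii}=\mathrm{id}$ and $X_{jk}X_{ij}=X_{ik}$; $X$ is finitely generated iff all $X_i$ are finitely generated $\Lambda$-modules. A subspace representation of $P$ is such a representation in which all maps $X_{ij}$ are monomorphisms. $\operatorname{Mod}$ / $\operatorname{mod}$ denote all / finitely generated right modules. *)

(* Defs.v *)
From HB Require Import structures.
From mathcomp Require Import all_boot all_order all_algebra.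
Set Implicit Arguments. Unset Strict Implicit. Unset Printing Implicit Defensive.
Import GRing.Theory.
Local Open Scope ring_scope.

(* Right R-modules are left modules over the converse ring R^c. *)
Notation rmodType R := (lmodType (R^c)%type).

Definition lin (R : pzRingType) (M N : lmodType R) (f : M -> N) : Prop :=
  forall (a : R) (x y : M), f (a *: x + y) = a *: f x + f y.

Definition submod (R : pzRingType) (M : lmodType R) (U : M -> Prop) : Prop :=
  U 0 /\ forall (a : R) (x y : M), U x -> U y -> U (a *: x + y).

Definition fin_gen (R : pzRingType) (M : lmodType R) : Prop :=
  exists s : seq M, forall x : M,
    exists c : seq R, x = \sum_(i < size s) c`_i *: s`_i.

Definition simple_mod (R : pzRingType) (M : lmodType R) : Prop :=
  (exists x : M, x != 0) /\
  forall U : M -> Prop, submod U -> (forall x, U x -> x = 0) \/ (forall x, U x).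

Definition injective_mod (R : pzRingType) (E : lmodType R) : Prop :=
  forall (A B : lmodType R) (m : A -> B) (g : A -> E),
    lin m -> injective m -> lin g ->
    exists h : B -> E, lin h /\ forall a, h (m a) = g a.

Definition essential_mono (R : pzRingType) (S E : lmodType R) (f : S -> E) : Prop :=
  [/\ lin f, injective f &
      forall U : E -> Prop, submod U -> (exists u, U u /\ u != 0) ->
        exists s, s != 0 /\ U (f s)].

Definition injective_envelope (R : pzRingType) (S E : lmodType R) (f : S -> E) :=
  essential_mono f /\ injective_mod E.

Definition right_ideal (R : pzRingType) (I : R -> Prop) : Prop :=
  [/\ I 0, forall x y, I x -> I y -> I (x - y) & forall x r, I x -> I (x * r)].

Definition right_artinian (R : pzRingType) : Prop :=
  forall I : nat -> R -> Prop,
    (forall n, right_ideal (I n)) ->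
    (forall n x, I n.+1 x -> I n x) ->
    exists N, forall n, (N <= n)%N -> forall x, I n x <-> I N x.

Definition right_Morita (R : pzRingType) : Prop :=
  right_artinian R /\
  forall S : rmodType R, simple_mod S ->
    exists (E : rmodType R) (f : S -> E), injective_envelope f /\ fin_gen E.

(* P^* = option P, with None the added largest element *. *)
Definition leS (d : Order.disp_t) (P : finPOrderType d) (i j : option P) : bool :=
  match j, i with
  | None, _ => true
  | Some _, None => false
  | Some j', Some i' => (i' <= j')%O
  end.

(* Right Lambda P^*-modules, as representations (X_i, X_ij). *)
Record rep (R : pzRingType) (d : Order.disp_t) (P : finPOrderType d) := Rep {
  rep_obj : option P -> rmodType R;
  rep_map : forall i j : option P, leS i j -> rep_obj i -> rep_obj j;
  rep_lin : forall i j (h : leS i j), lin (rep_map h);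
  rep_id : forall i (h : leS i i) x, rep_map h x = x;
  rep_comp : forall i j k (hij : leS i j) (hjk : leS j k) (hik : leS i k) x,
      rep_map hjk (rep_map hij x) = rep_map hik x }.
Arguments rep_obj {R d P} r i.
Arguments rep_map {R d P} r {i j} h _.

(* Morphisms of representations = Lambda P^*-module homomorphisms. *)
Record rep_hom (R : pzRingType) (d : Order.disp_t) (P : finPOrderType d)
    (X Y : rep R P) := Hom {
  hom_fun : forall i, rep_obj X i -> rep_obj Y i;
  hom_lin : forall k, lin (@hom_fun k);
  hom_nat : forall i j (h : leS i j) x,
      @hom_fun j (rep_map X h x) = rep_map Y h (@hom_fun i x) }.
Arguments hom_fun {R d P X Y} _ i _.

Definition subspace_rep (R : pzRingType) (d : Order.disp_t) (P : finPOrderType d)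
  (X : rep R P) : Prop :=
  forall i j (h : leS i j), injective (rep_map X h).

Definition fg_rep (R : pzRingType) (d : Order.disp_t) (P : finPOrderType d)
  (X : rep R P) : Prop :=
  forall i, fin_gen (rep_obj X i).

(* Main.v *)
Require Import Defs.
From mathcomp Require Import all_boot all_order all_algebra.
From HB Require Import structures.
From mathcomp Require Import all_boot all_order all_algebra.
From mathcomp Require Import boolp.
From Stdlib Require Import ProofIrrelevance.
Set Implicit Arguments. Unset Strict Implicit. Unset Printing Implicit Defensive.
Import GRing.Theory.
Local Open Scope ring_scope.

Section Sub.
Variables (K : pzRingType) (M : lmodType K) (U : M -> Prop) (hU : submod U).
Definition subT of submod U := {x : M | U x}.
Local Notation sT := (subT hU).
HB.instance Definition _ := gen_eqMixin sT.
HB.instance Definition _ := gen_choiceMixin sT.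
Lemma subT_eq (a b : sT) : proj1_sig a = proj1_sig b -> a = b.
Proof. case: a b => a ha [b hb] /= e; subst; congr exist; apply: proof_irrelevance. Qed.
Lemma U0 : U 0. Proof. by case: hU. Qed.
Lemma UD x y : U x -> U y -> U (x + y).
Proof. move=> hx hy; have := hU.2 1 x y hx hy; by rewrite scale1r. Qed.
Lemma UZ a x : U x -> U (a *: x).
Proof. move=> hx; have := hU.2 a x 0 hx U0; by rewrite addr0. Qed.
Lemma UN x : U x -> U (- x).
Proof. move=> hx; have := UZ (-1) hx; by rewrite scaleN1r. Qed.
Definition s0 : sT := exist _ 0 U0.
Definition sadd (a b : sT) : sT := exist _ _ (UD (proj2_sig a) (proj2_sig b)).
Definition sopp (a : sT) : sT := exist _ _ (UN (proj2_sig a)).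
Definition sscale k (a : sT) : sT := exist _ _ (UZ k (proj2_sig a)).
Lemma saddA : associative sadd. Proof. by move=> *; apply: subT_eq; rewrite /= addrA. Qed.
Lemma saddC : commutative sadd. Proof. by move=> *; apply: subT_eq; rewrite /= addrC. Qed.
Lemma sadd0 : left_id s0 sadd. Proof. by move=> *; apply: subT_eq; rewrite /= add0r. Qed.
Lemma saddN : left_inverse s0 sopp sadd. Proof. by move=> *; apply: subT_eq; rewrite /= addNr. Qed.
HB.instance Definition _ := GRing.isZmodule.Build sT saddA saddC sadd0 saddN.
Lemma sscaleA a b v : sscale a (sscale b v) = sscale (a * b) v.
Proof. by apply: subT_eq; rewrite /= scalerA. Qed.
Lemma sscale1 : left_id 1 sscale. Proof. by move=> *; apply: subT_eq; rewrite /= scale1r. Qed.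
Lemma sscaleDr : right_distributive sscale +%R.
Proof. by move=> *; apply: subT_eq; rewrite /= scalerDr. Qed.
Lemma sscaleDl v : {morph sscale^~ v : a b / a + b}.
Proof. by move=> *; apply: subT_eq; rewrite /= scalerDl. Qed.
HB.instance Definition _ := GRing.Zmodule_isLmodule.Build K sT sscaleA sscale1 sscaleDr sscaleDl.
Lemma subT_val_lin : lin (fun a : sT => proj1_sig a). Proof. by []. Qed.
End Sub.
Arguments subT {K M U} _.
Arguments subT_eq {K M U hU} a b.
From HB Require Import structures.
From mathcomp Require Import all_boot all_order all_algebra.
From Stdlib Require Import ProofIrrelevance Classical ClassicalEpsilon.
Set Implicit Arguments. Unset Strict Implicit. Unset Printing Implicit Defensive.
Import GRing.Theory.
Local Open Scope ring_scope.

Section Gen.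
Variables (K : pzRingType) (M : lmodType K).
Implicit Types (N V W C : M -> Prop).

Definition addcyc (N : M -> Prop) (a : M) : M -> Prop := fun x => exists r y, N y /\ x = y + r *: a.
Fixpoint genp (N : M -> Prop) (s : seq M) : M -> Prop :=
  match s with [::] => N | a :: s' => genp (addcyc N a) s' end.

Lemma submodD N x y : submod N -> N x -> N y -> N (x + y).
Proof. move=> hN hx hy; have := hN.2 1 x y hx hy; by rewrite scale1r. Qed.
Lemma submodZ N a x : submod N -> N x -> N (a *: x).
Proof. move=> hN hx; have := hN.2 a x 0 hx hN.1; by rewrite addr0. Qed.
Lemma submodN N x : submod N -> N x -> N (- x).
Proof. move=> hN hx; have := submodZ (-1) hN hx; by rewrite scaleN1r. Qed.
Lemma submodB N x y : submod N -> N x -> N y -> N (x - y).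
Proof. move=> hN hx hy; apply: submodD => //; exact: submodN. Qed.

Lemma addcyc_sub N a : submod N -> submod (addcyc N a).
Proof.
move=> hN; split; first by exists 0, 0; rewrite scale0r addr0; split=> //; case: hN.
move=> c x y [r [u [hu ->]]] [r' [u' [hu' ->]]].
exists (c * r + r'), (c *: u + u'); split; first by apply: hN.2.
by rewrite scalerDr scalerDl scalerA addrACA.
Qed.
Lemma addcyc_le N a x : N x -> addcyc N a x.
Proof. by move=> hx; exists 0, x; rewrite scale0r addr0. Qed.
Lemma addcyc_a N a : submod N -> addcyc N a a.
Proof. by move=> hN; exists 1, 0; rewrite scale1r add0r; split=> //; case: hN. Qed.

Lemma genp_sub s : forall N, submod N -> submod (genp N s).
Proof. elim: s => [|a s IH] N hN //=; apply: IH; exact: addcyc_sub. Qed.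
Lemma genp_le s : forall N x, N x -> genp N s x.
Proof. elim: s => [|a s IH] N x hx //=; apply: IH; exact: addcyc_le. Qed.
Lemma genp_mem s : forall N a, submod N -> a \in s -> genp N s a.
Proof.
elim: s => [|b s IH] N a hN //=; rewrite inE => /orP [/eqP -> | ha].
  by apply: genp_le; apply: addcyc_a.
by apply: IH => //; apply: addcyc_sub.
Qed.
Lemma genp_min s : forall N C, submod C -> (forall x, N x -> C x) ->
  (forall a, a \in s -> C a) -> forall x, genp N s x -> C x.
Proof.
elim: s => [|b s IH] N C hC hNC hs //=; apply: IH => //.
  move=> x [r [y [hy ->]]]; apply: submodD => //; first exact: hNC.
  by apply: submodZ => //; apply: hs; rewrite inE eqxx.
by move=> a ha; apply: hs; rewrite inE ha orbT.
Qed.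

Definition zeroP : M -> Prop := fun x => x = 0.
Lemma zeroP_sub : submod zeroP.
Proof. by split => // a x y -> ->; rewrite scaler0 addr0. Qed.

Lemma genp_sum s : forall N x, genp N s x ->
  exists y (c : seq K), N y /\ x = y + \sum_(i < size s) c`_i *: s`_i.
Proof.
elim: s => [|a s IH] N x /=.
  by move=> hx; exists x, [::]; rewrite big_ord0 addr0.
move=> /IH [y [c [[r [u [hu ->]]] ->]]].
exists u, (r :: c); split=> //; rewrite big_ord_recl /=.
by rewrite -addrA; congr (_ + _).
Qed.

Lemma sum_genp s : forall N y (c : seq K), submod N -> N y ->
  genp N s (y + \sum_(i < size s) c`_i *: s`_i).
Proof.
elim: s => [|a s IH] N y c hN hy /=; first by rewrite big_ord0 addr0.
rewrite big_ord_recl /= addrA.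
have := IH (addcyc N a) (y + c`_0 *: a) (behead c) (addcyc_sub a hN).
have -> : \sum_(i < size s) (behead c)`_i *: s`_i = \sum_(i < size s) c`_(bump 0 i) *: s`_i.
  by apply: eq_bigr => i _; rewrite nth_behead.
apply; by exists c`_0, y.
Qed.

Lemma fin_genP : fin_gen M <-> exists s, forall x, genp zeroP s x.
Proof.
split=> [[s hs] | [s hs]]; exists s => x.
  have [c ->] := hs x; rewrite -[X in genp _ _ X]add0r.
  by apply: sum_genp => //; apply: zeroP_sub.
have [y [c [-> ->]]] := genp_sum (hs x); by exists c; rewrite add0r.
Qed.

Definition lidK (I : K -> Prop) :=
  [/\ I 0, forall x y, I x -> I y -> I (x - y) & forall r x, I x -> I (r * x)].
Definition artK := forall I : nat -> K -> Prop, (forall n, lidK (I n)) ->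
    (forall n x, I n.+1 x -> I n x) ->
    exists k0, forall n, (k0 <= n)%N -> forall x, I n x <-> I k0 x.

Lemma desc_le (V : nat -> M -> Prop) : (forall n x, V n.+1 x -> V n x) ->
  forall m n, (m <= n)%N -> forall x, V n x -> V m x.
Proof.
move=> hV m n /subnKC <-; elim: (n - m)%N => [|k IH] x; first by rewrite addn0.
by rewrite addnS => /hV /IH.
Qed.

Lemma dcc_rel (hart : artK) s : forall N, submod N ->
  forall V : nat -> M -> Prop, (forall n, submod (V n)) ->
  (forall n x, V n.+1 x -> V n x) -> (forall n x, N x -> V n x) ->
  (forall n x, V n x -> genp N s x) ->
  exists k0, forall n, (k0 <= n)%N -> forall x, V n x <-> V k0 x.
Proof.
elim: s => [|a s IH] N hN V hV hdesc hNV hVg /=.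
  by exists 0%N => n _ x; split => /hVg /= h; apply: hNV.
pose I n := fun r => V n (r *: a).
have [k1 hk1] : exists k1, forall n, (k1 <= n)%N -> forall r, I n r <-> I k1 r.
  apply: hart => [n|n x]; last exact: hdesc.
  split; rewrite /I.
  - by rewrite scale0r; case: (hV n).
  - by move=> x y hx hy; rewrite scalerBl; apply: submodB.
  - by move=> r x hx; rewrite -scalerA; apply: submodZ.
pose U n := addcyc (V n) a.
have [k2 hk2] : exists k2, forall n, (k2 <= n)%N -> forall x, U n x <-> U k2 x.
  apply: (IH (addcyc N a)) => //.
  - exact: addcyc_sub.
  - by move=> n; apply: addcyc_sub.
  - by move=> n x [r [y [/hdesc hy ->]]]; exists r, y.
  - by move=> n x [r [y [hy ->]]]; exists r, y; split=> //; apply: hNV.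
  - move=> n x [r [y [hy ->]]].
    apply: submodD; [apply: genp_sub; exact: addcyc_sub | exact: (hVg n y hy) |].
    apply: genp_le; exists r, 0; split; first by case: hN.
    by rewrite add0r.
exists (maxn k1 k2) => n hn x; split; first exact: (desc_le hdesc hn).
move=> hx.
have hU : U n x.
  have h2 : (k2 <= n)%N := leq_trans (leq_maxr _ _) hn.
  apply: (proj2 (hk2 n h2 x)); apply: (proj1 (hk2 _ (leq_maxr _ _) x)); exact: (addcyc_le a hx).
case: hU => r [y [hy ex]]; rewrite ex in hx *.
have hy' : V (maxn k1 k2) y by apply: (desc_le hdesc hn).
have hr : I (maxn k1 k2) r.
  rewrite /I (_ : r *: a = (y + r *: a) - y); last by rewrite addrC addKr.
  exact: (submodB (hV _) hx hy').
have h1 : (k1 <= n)%N := leq_trans (leq_maxl _ _) hn.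
have hrn : I n r by apply: (proj2 (hk1 n h1 r)); apply: (proj1 (hk1 _ (leq_maxl _ _) r)) hr.
exact: (submodD (hV n) hy hrn).
Qed.

End Gen.
From HB Require Import structures.
From mathcomp Require Import all_boot all_order all_algebra.
From Stdlib Require Import ProofIrrelevance Classical ClassicalEpsilon.
Set Implicit Arguments. Unset Strict Implicit. Unset Printing Implicit Defensive.
Import GRing.Theory.
Local Open Scope ring_scope.

Section Lin.
Variables (K : pzRingType).
Lemma lin0 (A B : lmodType K) (f : A -> B) : lin f -> f 0 = 0.
Proof. move=> hf; have e := hf 1 0 0; rewrite !scale1r addr0 in e; have := congr1 (fun v => v - f 0) e; by rewrite addrK subrr. Qed.
Lemma linD (A B : lmodType K) (f : A -> B) x y : lin f -> f (x + y) = f x + f y.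
Proof. move=> hf; have := hf 1 x y; by rewrite !scale1r. Qed.
Lemma linZ (A B : lmodType K) (f : A -> B) a x : lin f -> f (a *: x) = a *: f x.
Proof. move=> hf; have := hf a x 0; by rewrite addr0 (lin0 hf) addr0. Qed.
Lemma linB (A B : lmodType K) (f : A -> B) x y : lin f -> f (x - y) = f x - f y.
Proof.
move=> hf; have := hf (-1) y x; rewrite !scaleN1r => e.
by rewrite addrC e addrC.
Qed.
End Lin.

Section Emb.
Variables (K : pzRingType).

Definition ltS (M : lmodType K) (V W : M -> Prop) :=
  [/\ submod V, (forall x, V x -> W x) & exists x, W x /\ ~ V x].

Lemma acc_all (M : lmodType K) : artK K -> fin_gen M ->
  forall W : M -> Prop, submod W -> Acc (@ltS M) W.
Proof.
move=> hart /fin_genP [s hs] W0 hW0; apply: NNPP => hnacc.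
pose T := {W : M -> Prop | submod W /\ ~ Acc (@ltS M) W}.
have step : forall t : T, exists t' : T, ltS (proj1_sig t') (proj1_sig t).
  move=> [W [hW hna]] /=; apply: NNPP => hne; apply: hna; constructor => V hV.
  apply: NNPP => hVa; apply: hne.
  have hVs : submod V by case: hV.
  by exists (exist _ V (conj hVs hVa)).
pose next (t : T) := proj1_sig (constructive_indefinite_description _ (step t)).
have hnext t : ltS (proj1_sig (next t)) (proj1_sig t).
  exact: proj2_sig (constructive_indefinite_description _ (step t)).
pose t0 : T := exist _ W0 (conj hW0 hnacc).
pose V n := proj1_sig (iter n next t0).
have hVs n : submod (V n) by rewrite /V; case: (iter n next t0) => ? [].
have hdesc n x : V n.+1 x -> V n x.
  by rewrite /V /=; case: (hnext (iter n next t0)) => _ h _; apply: h.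
have [k hk] := dcc_rel hart (zeroP_sub M) hVs hdesc
  (fun n x (e : zeroP x) => eq_ind_r _ (proj1 (hVs n)) e) (fun n x _ => hs x).
case: (hnext (iter k next t0)) => _ _ [x [hx hnx]].
by apply: hnx; apply/(hk k.+1 (leqnSn k)).
Qed.

Definition nz (M : lmodType K) (V : M -> Prop) := exists x, V x /\ x <> 0.

Lemma min_nonzero (M : lmodType K) :
  (forall W : M -> Prop, submod W -> Acc (@ltS M) W) ->
  forall W, submod W -> nz W -> exists V : M -> Prop,
  [/\ submod V, (forall x, V x -> W x), nz V &
      forall U, submod U -> (forall x, U x -> V x) -> nz U -> forall x, V x -> U x].
Proof.
move=> hacc W hW; have hA := hacc W hW; move: hW; elim: hA => {}W _ IH hWs hnz.
case: (classic (forall U, submod U -> (forall x, U x -> W x) -> nz U ->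
   forall x, W x -> U x)) => hmin; first by exists W.
have [U hU] := not_all_ex_not _ _ hmin.
have [hUs hU1] := imply_to_and _ _ hU.
have [hUW hU2] := imply_to_and _ _ hU1.
have [hUnz hU3] := imply_to_and _ _ hU2.
have [x hx] := not_all_ex_not _ _ hU3.
have [hWx hnUx] := imply_to_and _ _ hx.
have hlt : ltS U W by split=> //; exists x.
have [V [hV hVU hVnz hVmin]] := IH U hlt hUs hUnz.
by exists V; split=> // y /hVU /hUW.
Qed.

Lemma min_simple (M : lmodType K) (V : M -> Prop) (hV : submod V) :
  nz V -> (forall U, submod U -> (forall x, U x -> V x) -> nz U -> forall x, V x -> U x) ->
  simple_mod (subT hV).
Proof.
move=> [x [hx hx0]] hmin; split.
  exists (exist _ x hx : subT hV); apply/eqP => e.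
  by apply: hx0; have := congr1 (@proj1_sig _ _) e.
move=> U hU.
pose U' := fun y : M => exists h : V y, U (exist _ y h).
have hU' : submod U'.
  split; first by exists (U0 hV); have := hU.1.
  move=> a y z [hy uy] [hz uz].
  have h := hU.2 a _ _ uy uz.
  exists (hV.2 a y z hy hz).
  suff -> : (exist _ (a *: y + z) (hV.2 a y z hy hz) : subT hV) =
     a *: (exist _ y hy : subT hV) + exist _ z hz by [].
  by apply: subT_eq.
case: (classic (exists a, U a /\ a <> 0)) => [[a [ha ha0]] | hno]; [right | left].
  have hnz : nz U'.
    exists (proj1_sig a); split; first by exists (proj2_sig a); case: a ha {ha0}.
    move=> e; apply: ha0; apply: subT_eq; by rewrite e.
  move=> b; have [hb ub] := hmin U' hU' (fun y (hy : U' y) => let: ex_intro h _ := hy in h) hnz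
     (proj1_sig b) (proj2_sig b).
  suff -> : b = (exist _ (proj1_sig b) hb : subT hV) by []. by apply: subT_eq.
move=> a ha; apply: NNPP => hne; apply: hno; by exists a.
Qed.

End Emb.
From HB Require Import structures.
From mathcomp Require Import all_boot all_order all_algebra.
From Stdlib Require Import ProofIrrelevance Classical ClassicalEpsilon.
Set Implicit Arguments. Unset Strict Implicit. Unset Printing Implicit Defensive.
Import GRing.Theory.
Local Open Scope ring_scope.

Section Prod.
Variables (K : pzRingType).

Lemma inj_prod (E1 E2 : lmodType K) : injective_mod E1 -> injective_mod E2 ->
  injective_mod (E1 * E2)%type.
Proof.
move=> h1 h2 A B m g hm im hg.
have hg1 : lin (fun a => (g a).1) by move=> c x y; rewrite hg.
have hg2 : lin (fun a => (g a).2) by move=> c x y; rewrite hg.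
have [k1 [hk1 ek1]] := h1 A B m _ hm im hg1.
have [k2 [hk2 ek2]] := h2 A B m _ hm im hg2.
exists (fun b => (k1 b, k2 b)); split.
  by move=> c x y; rewrite hk1 hk2.
by move=> a; rewrite ek1 ek2; case: (g a).
Qed.

Lemma genp_all_lin (A B : lmodType K) (f : A -> B) (s : seq A) (C : B -> Prop) :
  lin f -> submod C -> (forall a, a \in s -> C (f a)) ->
  forall a, genp (@zeroP _ A) s a -> C (f a).
Proof.
move=> hf hC hs a ha.
apply: (genp_min (C := fun x => C (f x))) ha.
- split; first by rewrite (lin0 hf); case: hC.
  by move=> c x y hx hy; rewrite hf; apply: hC.2.
- by move=> x ->; rewrite (lin0 hf); case: hC.
- exact: hs.
Qed.

Lemma fg_prod (E1 E2 : lmodType K) : fin_gen E1 -> fin_gen E2 ->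
  fin_gen (E1 * E2)%type.
Proof.
move=> /fin_genP [s1 h1] /fin_genP [s2 h2]; apply/fin_genP.
exists ([seq (e, 0) | e <- s1] ++ [seq (0, e) | e <- s2]) => [[x1 x2]].
set C := genp _ _.
have hC : submod C by apply: genp_sub; apply: zeroP_sub.
have e : (x1, x2) = (x1, 0) + (0, x2) :> (E1 * E2)%type.
  by congr pair; rewrite /= ?addr0 ?add0r.
rewrite e; apply: submodD => //.
  apply: (genp_all_lin (f := fun e => (e, 0 : E2))) (h1 x1) => //.
    by move=> c x y /=; congr pair; rewrite /= ?scaler0 ?addr0.
  by move=> a ha; apply: genp_mem; [apply: zeroP_sub|rewrite mem_cat map_f].
apply: (genp_all_lin (f := fun e => (0 : E1, e))) (h2 x2) => //.
  by move=> c x y /=; congr pair; rewrite /= ?scaler0 ?addr0.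
by move=> a ha; apply: genp_mem; [apply: zeroP_sub|rewrite mem_cat map_f ?orbT].
Qed.

Lemma fg_image (A B : lmodType K) (f : A -> B) : lin f ->
  (forall b, exists a, f a = b) -> fin_gen A -> fin_gen B.
Proof.
move=> hf hsurj /fin_genP [s hs]; apply/fin_genP; exists (map f s) => b.
have [a <-] := hsurj b.
apply: (genp_all_lin hf) (hs a); first by apply: genp_sub; apply: zeroP_sub.
by move=> x hx; apply: genp_mem; [apply: zeroP_sub | apply: map_f].
Qed.

Lemma inj_ffun (P : finType) (E : lmodType K) : injective_mod E ->
  injective_mod {ffun P -> E}.
Proof.
move=> hE A B m g hm im hg.
have ex p : exists h : B -> E, lin h /\ forall a, h (m a) = g a p.
  apply: hE => // c x y; by rewrite hg !ffunE.
pose H p := proj1_sig (constructive_indefinite_description _ (ex p)).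
have hH p : lin (H p) /\ forall a, H p (m a) = g a p.
  exact: proj2_sig (constructive_indefinite_description _ (ex p)).
exists (fun b => [ffun p => H p b]); split.
  by move=> c x y; apply/ffunP => p; rewrite !ffunE (proj1 (hH p)).
by move=> a; apply/ffunP => p; rewrite ffunE (proj2 (hH p)).
Qed.

Lemma fg_ffun (P : finType) (E : lmodType K) : fin_gen E -> fin_gen {ffun P -> E}.
Proof.
move=> /fin_genP [s hs]; apply/fin_genP.
pose delta (p : P) (e : E) : {ffun P -> E} := [ffun q => if q == p then e else 0].
exists [seq delta p e | p <- enum P, e <- s] => f.
set C := genp _ _.
have hC : submod C by apply: genp_sub; apply: zeroP_sub.
have -> : f = \sum_(p : P) delta p (f p).
  apply/ffunP => q; rewrite sum_ffunE (bigD1 q) //= big1 ?addr0 ?ffunE ?eqxx //.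
  by move=> p /negbTE hp; rewrite ffunE eq_sym hp.
apply: (big_ind C) => //; first by case: hC.
  by move=> x y; apply: submodD.
move=> p _; apply: (genp_all_lin (f := delta p)) (hs (f p)) => //.
  by move=> c x y; apply/ffunP => q; rewrite !ffunE; case: (q == p); rewrite ?scaler0 ?addr0.
move=> a ha; apply: genp_mem; first by apply: zeroP_sub.
by apply/allpairsP; exists (p, a); rewrite mem_enum.
Qed.

Definition Z0 : lmodType K := 'M[K]_(0, 0).
Lemma inj_Z0 : injective_mod Z0.
Proof.
move=> A B m g _ _ _; exists (fun _ => 0); split; first by move=> *; rewrite scaler0 addr0.
by move=> a; rewrite [g a]flatmx0.
Qed.
Lemma fg_Z0 : fin_gen Z0.
Proof. by exists [::] => x; exists [::]; rewrite big_ord0 flatmx0. Qed.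

End Prod.
From HB Require Import structures.
From mathcomp Require Import all_boot all_order all_algebra.
From Stdlib Require Import ProofIrrelevance Classical ClassicalEpsilon.
Set Implicit Arguments. Unset Strict Implicit. Unset Printing Implicit Defensive.
Import GRing.Theory.
Local Open Scope ring_scope.

Section Embed.
Variables (K : pzRingType).
Hypothesis hart : artK K.
Hypothesis hMor : forall S : lmodType K, simple_mod S ->
  exists (E : lmodType K) (f : S -> E), [/\ lin f, injective f, injective_mod E & fin_gen E].

Lemma embed (M : lmodType K) : fin_gen M ->
  exists (E : lmodType K) (i : M -> E), [/\ lin i, injective i, injective_mod E & fin_gen E].
Proof.
move=> hfg; have hacc := acc_all hart hfg.
suff main : forall W : M -> Prop, submod W -> forall (E : lmodType K) (h : M -> E),
    lin h -> injective_mod E -> fin_gen E -> (forall x, h x = 0 <-> W x) ->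
    exists (E : lmodType K) (i : M -> E), [/\ lin i, injective i, injective_mod E & fin_gen E].
  have hT : submod (fun _ : M => True) by [].
  apply: (main _ hT (Z0 K) (fun _ => 0)).
  - by move=> *; rewrite scaler0 addr0.
  - exact: inj_Z0.
  - exact: fg_Z0.
  - by move=> x; split=> // _; rewrite [LHS]flatmx0.
move=> W hW; have hA := hacc W hW; move: hW; elim: hA => {}W _ IH hW E h hh hE hfE hker.
case: (classic (nz W)) => hnz; last first.
  exists E, h; split=> // x y e.
  apply/eqP; rewrite -subr_eq0; apply/eqP; apply: NNPP => hne; apply: hnz.
  exists (x - y); split=> //; apply/hker; by rewrite (linB _ _ hh) e subrr.
have [V [hV hVW hVnz hVmin]] := min_nonzero hacc hW hnz.
have hS := min_simple hV hVnz hVmin.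
have [ES [f [hf finj hES hfES]]] := hMor hS.
have [k [hk ek]] := hES (subT hV) M (fun a => proj1_sig a) f (@subT_val_lin _ _ _ hV)
   (fun a b e => subT_eq a b e) hf.
pose W' := fun x => W x /\ k x = 0.
have hW' : submod W'.
  split; first by split; [case: hW | exact: lin0].
  by move=> c x y [hx kx] [hy ky]; split; [apply: hW.2 | rewrite hk kx ky scaler0 addr0].
apply: (IH W' _ hW' (E * ES)%type (fun x => (h x, k x))).
- split=> //; first by move=> x [].
  case: hVnz => x [hx hx0]; exists x; split; first exact: hVW.
  move=> [_ kx]; apply: hx0.
  have : f (exist _ x hx) = f 0 by rewrite (lin0 hf) -ek.
  by move/finj => e; have := congr1 (@proj1_sig _ _) e.
- by move=> c x y; rewrite hh hk.
- exact: inj_prod.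
- exact: fg_prod.
- move=> x; split.
    move=> e; have /= h1 := congr1 fst e; have /= h2 := congr1 snd e.
    by split; [apply/hker|].
  by move=> [/hker -> ->].
Qed.

Lemma embed_family (I : eqType) (Mf : I -> lmodType K) (l : seq I) :
  (forall i, fin_gen (Mf i)) ->
  exists (E : lmodType K), [/\ injective_mod E, fin_gen E &
    forall i, i \in l -> exists ii : Mf i -> E, lin ii /\ injective ii].
Proof.
move=> hfg; elim: l => [|a l [E [hE hfE hl]]].
  by exists (Z0 K); split=> //; [apply: inj_Z0 | apply: fg_Z0].
have [Ea [ia [hia iia hEa hfEa]]] := embed (hfg a).
exists (E * Ea)%type; split; [exact: inj_prod | exact: fg_prod |].
move=> i; rewrite inE; case: (eqVneq i a) => [-> _ | _ /= hi].
  exists (fun x => (0, ia x)); split.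
    by move=> c x y; rewrite hia; congr pair; rewrite /= scaler0 addr0.
  by move=> x y [] /iia.
have [ii [hii iii]] := hl i hi.
exists (fun x => (ii x, 0)); split.
  by move=> c x y; rewrite hii; congr pair; rewrite /= scaler0 addr0.
by move=> x y [] /iii.
Qed.
End Embed.
From HB Require Import structures.
From mathcomp Require Import all_boot all_order all_algebra.
From Stdlib Require Import ProofIrrelevance Classical ClassicalEpsilon.
Set Implicit Arguments. Unset Strict Implicit. Unset Printing Implicit Defensive.
Import GRing.Theory.
Local Open Scope ring_scope.

Section Main.
Variables (R : pzRingType) (d : Order.disp_t) (P : finPOrderType d).

Lemma leS_trans (i j k : option P) : leS i j -> leS j k -> leS i k.
Proof.
case: k => [k|] //; case: j => [j|] //; case: i => [i|] //=.
exact: Order.POrderTheory.le_trans.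
Qed.

Lemma leS_refl (i : option P) : leS i i.
Proof. by case: i => //= i; exact: Order.POrderTheory.lexx. Qed.

Variable X : rep R P.

Definition rsel (i j : option P) (b : bool) : leS i j = b -> rep_obj X i -> rep_obj X j :=
  match b with true => fun h => rep_map X h | false => fun _ _ => 0 end.
Definition rmap' i j : rep_obj X i -> rep_obj X j := @rsel i j (leS i j) erefl.
Arguments rmap' : clear implicits.
Lemma rselE i j b (e : leS i j = b) (h : leS i j) x : rsel e x = rep_map X h x.
Proof. case: b e => e /=; [by rewrite (eq_irrelevance e h) | by rewrite h in e]. Qed.
Lemma rmap'E i j (h : leS i j) x : rmap' i j x = rep_map X h x.
Proof. exact: rselE. Qed.

Definition Ip (j : option P) : rep_obj X None -> Prop :=
  fun y => exists x, y = rep_map X (isT : leS j None) x.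
Lemma Ip_sub j : submod (Ip j).
Proof.
split; first by exists 0; rewrite (lin0 (@rep_lin _ _ _ X _ _ (isT : leS j None))).
move=> a _ _ [x ->] [y ->]; exists (a *: x + y); by rewrite rep_lin.
Qed.
Definition LXo (j : option P) : rmodType R := subT (Ip_sub j).
Lemma Ip_map j k (h : leS j k) y : Ip j y -> Ip k y.
Proof.
move=> [x ->]; exists (rep_map X h x); by rewrite rep_comp.
Qed.
Definition lmapL j k (h : leS j k) (a : LXo j) : LXo k :=
  exist _ (proj1_sig a) (Ip_map h (proj2_sig a)).
Lemma lmapL_lin j k (h : leS j k) : lin (@lmapL j k h).
Proof. by move=> c x y; apply: subT_eq. Qed.
Lemma lmapL_id j (h : leS j j) x : lmapL h x = x.
Proof. by apply: subT_eq. Qed.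
Lemma lmapL_comp i j k (hij : leS i j) (hjk : leS j k) (hik : leS i k) x :
  lmapL hjk (lmapL hij x) = lmapL hik x.
Proof. by apply: subT_eq. Qed.
Definition LX : rep R P := Rep lmapL_lin lmapL_id lmapL_comp.

Definition lfun j (x : rep_obj X j) : LXo j :=
  exist _ (rep_map X (isT : leS j None) x) (ex_intro _ x erefl).
Lemma lfun_lin j : lin (@lfun j).
Proof. by move=> c x y; apply: subT_eq => /=; rewrite rep_lin. Qed.
Lemma lfun_nat i j (h : leS i j) x : lfun (rep_map X h x) = lmapL h (lfun x).
Proof. by apply: subT_eq => /=; rewrite rep_comp. Qed.
Definition lhom : rep_hom X LX := @Defs.Hom _ _ _ X LX (fun j => @lfun j) lfun_lin lfun_nat.

Lemma LX_sub : subspace_rep LX.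
Proof. move=> i j h a b /= e; apply: subT_eq; by have := congr1 (@proj1_sig _ _) e. Qed.

Lemma LX_fg : fg_rep X -> fg_rep LX.
Proof.
move=> hfg j; apply: (fg_image (@lfun_lin j)) (hfg j).
by move=> [y [x hx]]; exists x; apply: subT_eq.
Qed.

Lemma LX_univ (Z : rep R P) (f : rep_hom X Z) : subspace_rep Z ->
  exists g : rep_hom LX Z, forall i x, hom_fun g i (hom_fun lhom i x) = hom_fun f i x.
Proof.
move=> hZ.
have ex j (a : LXo j) : exists z, rep_map Z (isT : leS j None) z = hom_fun f None (proj1_sig a).
  case: a => y [x ex] /=; rewrite ex; exists (hom_fun f j x); by rewrite (hom_nat f).
pose g j a := proj1_sig (constructive_indefinite_description _ (ex j a)).
have hg j a : rep_map Z (isT : leS j None) (g j a) = hom_fun f None (proj1_sig a).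
  exact: proj2_sig (constructive_indefinite_description _ (ex j a)).
have glin j : lin (g j).
  move=> c x y; apply: (hZ j None isT).
  by rewrite rep_lin !hg (hom_lin f).
have gnat i j (h : leS i j) a : g j (lmapL h a) = rep_map Z h (g i a).
  apply: (hZ j None isT); rewrite hg rep_comp hg //.
exists (@Defs.Hom _ _ _ LX Z g glin gnat) => i x /=; apply: (hZ i None isT).
by rewrite hg /= (hom_nat f).
Qed.

Local Unset Implicit Arguments.
Variables (E : rmodType R) (iota : forall m : P, rep_obj X (Some m) -> E).
Hypotheses (hiota : forall m, lin (iota m)) (iiota : forall m, injective (iota m)).
Hypotheses (hE : injective_mod E) (hfE : fin_gen E).
Local Set Implicit Arguments.

Definition Cp (j : option P) : (rep_obj X j * {ffun P -> E})%type -> Prop :=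
  fun p => forall m : P, leS j (Some m) -> p.2 m = iota m (rmap' j (Some m) p.1).
Arguments Cp : clear implicits.
Lemma Cp_sub j : submod (Cp j).
Proof.
split.
  move=> m h /=; rewrite ffunE (rmap'E h) (lin0 (rep_lin h)) (lin0 (hiota m)) //.
move=> a p q hp hq m h /=; rewrite ffunE /= !(rmap'E h) rep_lin (hiota m).
by rewrite ffunE (hp m h) (hq m h) !(rmap'E h).
Qed.
Definition RXo (j : option P) : rmodType R := subT (Cp_sub j).
Lemma Cp_map j k (h : leS j k) p : Cp j p -> Cp k (rep_map X h p.1, p.2).
Proof.
move=> hp m hkm /=; have hjm := leS_trans h hkm.
by rewrite (hp m hjm) (rmap'E hkm) (rmap'E hjm) rep_comp.
Qed.
Definition rmapR j k (h : leS j k) (a : RXo j) : RXo k :=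
  exist _ _ (Cp_map h (proj2_sig a)).
Lemma rmapR_lin j k (h : leS j k) : lin (@rmapR j k h).
Proof. by move=> c x y; apply: subT_eq => /=; rewrite rep_lin. Qed.
Lemma rmapR_id j (h : leS j j) x : rmapR h x = x.
Proof. by apply: subT_eq => /=; rewrite rep_id; case: (proj1_sig x). Qed.
Lemma rmapR_comp i j k (hij : leS i j) (hjk : leS j k) (hik : leS i k) x :
  rmapR hjk (rmapR hij x) = rmapR hik x.
Proof. by apply: subT_eq => /=; rewrite rep_comp. Qed.
Definition RX : rep R P := Rep rmapR_lin rmapR_id rmapR_comp.

Definition rfun j (a : RXo j) : rep_obj X j := (proj1_sig a).1.
Lemma rfun_lin j : lin (@rfun j). Proof. by []. Qed.
Lemma rfun_nat i j (h : leS i j) x : rfun (rmapR h x) = rep_map X h (rfun x).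
Proof. by []. Qed.
Definition rhom : rep_hom RX X := @Defs.Hom _ _ _ RX X (fun j => @rfun j) rfun_lin rfun_nat.

Lemma RX_sub : subspace_rep RX.
Proof.
move=> i j h [[x e] hx] [[y e'] hy] /= eq.
have := congr1 (@proj1_sig _ _) eq => /= [[e1 e2]]; subst e'.
apply: subT_eq => /=; congr pair; clear eq.
case: i h x y hx hy e1 => [i|] h x y hx hy e1.
  have hii : leS (Some i) (Some i) := leS_refl _.
  apply: (iiota i); rewrite -(rep_id hii x) -(rep_id hii y) -!(rmap'E hii).
  by rewrite -(hx i hii) -(hy i hii).
by case: j h e1 => // h; rewrite !rep_id.
Qed.

Lemma RX_fg : fg_rep X -> fg_rep RX.
Proof.
move=> hfg j.
pose phi (p : (rep_obj X j * {ffun P -> E})%type) : (rep_obj X j * {ffun P -> E})%type :=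
  (p.1, [ffun m => if leS j (Some m) then iota m (rmap' j (Some m) p.1) else p.2 m]).
have hphi p : Cp j (phi p).
  by move=> m h; rewrite ffunE h.
pose ph p : RXo j := exist _ _ (hphi p).
have hl : lin ph.
  move=> c x y; apply: subT_eq => /=; congr pair; apply/ffunP => m; rewrite !ffunE.
  case: ifP => h //; rewrite !(rmap'E h) rep_lin (hiota m) //.
apply: (fg_image hl); last by apply: fg_prod; [apply: hfg | apply: fg_ffun].
move=> [[x e] hx]; exists (x, e); apply: subT_eq => /=; congr pair.
apply/ffunP => m; rewrite ffunE; case: ifP => h //; by rewrite (hx m h).
Qed.

Lemma RX_univ (Z : rep R P) (f : rep_hom Z X) : subspace_rep Z ->
  exists g : rep_hom Z RX, forall i z, hom_fun rhom i (hom_fun g i z) = hom_fun f i z.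
Proof.
move=> hZ.
have ex m : exists H : rep_obj Z None -> E, lin H /\
    forall z, H (rep_map Z (isT : leS (Some m) None) z) = iota m (hom_fun f (Some m) z).
  apply: hE; [exact: rep_lin | exact: hZ |].
  by move=> c x y; rewrite (hom_lin f) (hiota m).
pose H m := proj1_sig (constructive_indefinite_description _ (ex m)).
have hH m : lin (H m) /\ forall z, H m (rep_map Z (isT : leS (Some m) None) z) =
    iota m (hom_fun f (Some m) z).
  exact: proj2_sig (constructive_indefinite_description _ (ex m)).
have hC j z : Cp j (hom_fun f j z, [ffun m => H m (rep_map Z (isT : leS j None) z)]).
  move=> m h /=; rewrite ffunE (rmap'E h) -(hom_nat f).
  by rewrite -(proj2 (hH m)) rep_comp.
pose g j z : RXo j := exist _ _ (hC j z).
have glin j : lin (g j).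
  move=> c x y; apply: subT_eq => /=; congr pair; first by rewrite (hom_lin f).
  by apply/ffunP => m; rewrite !ffunE rep_lin (proj1 (hH m)).
have gnat i j (h : leS i j) z : g j (rep_map Z h z) = rmapR h (g i z).
  apply: subT_eq => /=; congr pair; first by rewrite (hom_nat f).
  by apply/ffunP => m; rewrite !ffunE rep_comp.
by exists (@Defs.Hom _ _ _ Z RX g glin gnat).
Qed.

End Main.
From HB Require Import structures.
From mathcomp Require Import all_boot all_order all_algebra.
From Stdlib Require Import ProofIrrelevance Classical ClassicalEpsilon.

Theorem lemma7 (R : pzRingType) (d : Order.disp_t) (P : finPOrderType d) :
  right_Morita R ->
  forall X : rep R P, fg_rep X ->
    (exists (RX : rep R P) (r : rep_hom RX X),
        [/\ subspace_rep RX, fg_rep RX &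
            forall (Z : rep R P) (f : rep_hom Z X), subspace_rep Z ->
              exists g : rep_hom Z RX,
                forall i z, hom_fun r i (hom_fun g i z) = hom_fun f i z]) /\
    (exists (LX : rep R P) (l : rep_hom X LX),
        [/\ subspace_rep LX, fg_rep LX &
            forall (Z : rep R P) (f : rep_hom X Z), subspace_rep Z ->
              exists g : rep_hom LX Z,
                forall i x, hom_fun g i (hom_fun l i x) = hom_fun f i x]).
Proof.
move=> [hart hmor] X hfg.
have hartK : artK (R^c)%type.
  move=> I hI hdesc; apply: hart => // n; case: (hI n) => h0 hB hM; split => //.
  by move=> x r hx; apply: hM.
have hMor : forall S : lmodType (R^c)%type, simple_mod S -> exists (E : lmodType (R^c)%type) (f : S -> E),
    [/\ lin f, injective f, injective_mod E & fin_gen E].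
  move=> S hS; have [E [f [[[hl hi _] hinj] hfgE]]] := hmor S hS.
  by exists E, f.
have [E [hE hfE hl]] := embed_family hartK (Mf := fun m : P => rep_obj X (Some m)) hMor
   (enum P) (fun m => hfg (Some m)).
have hl' m : exists ii : rep_obj X (Some m) -> E, lin ii /\ injective ii.
  by apply: hl; rewrite mem_enum.
pose iota m := proj1_sig (constructive_indefinite_description _ (hl' m)).
have hiota m : lin (iota m) := proj1 (proj2_sig (constructive_indefinite_description _ (hl' m))).
have iiota m : injective (iota m) := proj2 (proj2_sig (constructive_indefinite_description _ (hl' m))).
split.
  exists (RX hiota), (rhom hiota); split.
  - exact: RX_sub iiota.
  - exact: RX_fg hfE hfg.
  - by move=> Z f hZ; apply: RX_univ.
exists (LX X), (lhom X); split.
- exact: LX_sub.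
- exact: LX_fg.
- by move=> Z f hZ; apply: LX_univ.
Qed.
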